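(* Let $k\ge 2$, $n\ge1$, and let $L_n$ and $\varphi:L_n\to E^{n-1}$ be as in the context. Then $\varphi$ is injective.
   Context: $E=\{0,\dots,k-1\}$. For $\mathbf a\in E^n$, $w(\mathbf a)=a_1+\dots+a_n$, and $\mathcal B_t=\{\mathbf a\in E^n: w(\mathbf a)=t\}$. Let $g=\lfloor n(k-1)/2\rfloor$ and $C_i=\{\mathbf a\in E^n: a_1=i\}$. Define $L_n=(\mathcal B_0\cup\dots\cup\mathcal B_g)\cap(C_0\cup C_{k-1})$ if $n(k-1)$ is odd, and $L_n=((\mathcal B_0\cup\dots\cup\mathcal B_{g-1})\cap(C_0\cup C_{k-1}))\cup(\mathcal B_g\cap C_0)$ if $n(k-1)$ is even. For $a\in E$ let $\overline a=k-1-a$. Define $\varphi(a_1,\dots,a_n)=(a_2,\dots,a_n)$ if $a_1=0$ and $\varphi(a_1,\dots,a_n)=(\overline{a}_2,\dots,\overline{a}_n)$ if $a_1=k-1$. *)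

(* Defs.v *)
From mathcomp Require Import all_boot.
Set Implicit Arguments. Unset Strict Implicit. Unset Printing Implicit Defensive.

(* E = {0,...,k-1} is 'I_k ; E^n is n.-tuple 'I_k. *)

Definition weight (k n : nat) (a : n.-tuple 'I_k) : nat := \sum_(x <- a) (x : nat).

(* first coordinate a_1 (as a natural number; 0 if n = 0, never used then) *)
Definition first (k n : nat) (a : n.-tuple 'I_k) : nat := head 0 (map (@nat_of_ord k) a).

Definition gval (k n : nat) : nat := (n * (k - 1)) %/ 2.

Definition inL (k n : nat) (a : n.-tuple 'I_k) : bool :=
  let g := gval k n in
  let w := weight a in
  let a1 := first a in
  if odd (n * (k - 1)) then
    (w <= g) && ((a1 == 0) || (a1 == k - 1))
  else
    ((w < g) && ((a1 == 0) || (a1 == k - 1))) || ((w == g) && (a1 == 0)).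

Definition cbar (k : nat) (x : 'I_k) : 'I_k := rev_ord x.

Definition phi (k n : nat) (a : n.-tuple 'I_k) : n.-1.-tuple 'I_k :=
  if first a == 0 then behead_tuple a else map_tuple (@cbar k) (behead_tuple a).

(* Main.v *)
Require Import Defs.
From mathcomp Require Import all_boot.
From mathcomp Require Import zify.

Lemma sum_cbar k (s : seq 'I_k) :
  \sum_(x <- s) (x : nat) + \sum_(x <- map (@cbar k) s) (x : nat) = size s * (k - 1).
Proof.
elim: s => [|x s IH]; first by rewrite !big_nil.
rewrite /= !big_cons mulSn -IH /cbar /=.
have := ltn_ord x; lia.
Qed.

Theorem lemma2 (k n : nat) (hk : 2 <= k) (hn : 1 <= n) :
  {in [pred a : n.-tuple 'I_k | inL a] &, injective (@phi k n)}.
Proof.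
case: n hn => // m _ a b.
case/tupleP: a => x s; case/tupleP: b => y t.
rewrite !inE /inL /phi /first /weight /= !big_cons.
set W := gval k m.+1.
move=> Ha Hb.
have HW : 2 * W <= m.+1 * (k - 1) by rewrite /W /gval; have := divn_eq (m.+1 * (k-1)) 2; lia.
have HWo : odd (m.+1 * (k - 1)) -> 2 * W < m.+1 * (k - 1).
  move=> Ho; rewrite /W /gval; have := divn_eq (m.+1 * (k-1)) 2; rewrite modn2 Ho /=; lia.
have HWe : ~~ odd (m.+1 * (k - 1)) -> 2 * W = m.+1 * (k - 1).
  move=> Ho; rewrite /W /gval; have := divn_eq (m.+1 * (k-1)) 2; rewrite modn2 (negbTE Ho) /=; lia.
have Hs := sum_cbar k s; have Ht := sum_cbar k t.
rewrite size_tuple in Hs; rewrite size_tuple in Ht.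
have Hmul : m.+1 * (k - 1) = (k - 1) + m * (k - 1) by rewrite mulSn.
have key : forall (u v : m.-tuple 'I_k), map (@cbar k) u = map (@cbar k) v -> u = v.
  move=> u v /(inj_map (@rev_ord_inj k)) H; exact: val_inj.
have Hx := ltn_ord x; have Hy := ltn_ord y.
case Ho: (odd (m.+1 * (k - 1))) in Ha Hb.
- move/andP: Ha => [Ha1 /orP Ha2]; move/andP: Hb => [Hb1 /orP Hb2].
  move=> /(congr1 val) E.
  have [x0|xn0] := eqVneq (nat_of_ord x) 0; have [y0|yn0] := eqVneq (nat_of_ord y) 0;
  rewrite ?x0 ?y0 ?(negbTE xn0) ?(negbTE yn0) /= in E.
  + have -> : x = y by apply/val_inj; rewrite /= x0 y0.
    by have -> : s = t by apply/val_inj; exact: E.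
  + exfalso; have HWo' := HWo Ho.
    case: Hb2 => /eqP Hb2; first lia.
     rewrite E in Ha1.
    lia.
  + exfalso; have HWo' := HWo Ho.
    case: Ha2 => /eqP Ha2; first lia.
     rewrite -E in Hb1.
    lia.
  + case: Ha2 => /eqP Ha2; first lia.
    case: Hb2 => /eqP Hb2; first lia.
    have -> : x = y by apply/val_inj; rewrite /= Ha2 Hb2.
    have -> // : s = t; exact: key.
- have HWe' := HWe (negbT Ho).
  move=> /(congr1 val) E.
  have [x0|xn0] := eqVneq (nat_of_ord x) 0; have [y0|yn0] := eqVneq (nat_of_ord y) 0;
  rewrite ?x0 ?y0 ?(negbTE xn0) ?(negbTE yn0) /= in E.
  + have -> : x = y by apply/val_inj; rewrite /= x0 y0.
    by have -> : s = t by apply/val_inj; exact: E.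
  + exfalso.
    rewrite E in Ha; lia.
  + exfalso.
    rewrite -E in Hb; lia.
  + move: Ha Hb; rewrite (negbTE xn0) (negbTE yn0) !andbF !orbF /=.
    move=> /andP [_ /eqP Ha2] /andP [_ /eqP Hb2].
    have -> : x = y by apply/val_inj; rewrite /= Ha2 Hb2.
    have -> // : s = t; exact: key.
Qed.
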